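(* Let $N\ge1$, $k\in\mathbb{Z}$, $m\in\mathbb{Z}_{>0}$, $\Gamma\in\{\Gamma_0(N),\Gamma_1(N)\}$, and let $\psi\in J^N_{k,\frac mN}(\Gamma)$ be meromorphic with (at most) double poles at $z=z_s=\alpha\tau+\beta$ for $s=(\alpha,\beta)\in S(\psi)\subset\mathbb{Q}^2$. Then for all $\gamma=\begin{pmatrix}a&b\\c&d\end{pmatrix}\in\Gamma$: $E_s(\frac{a\tau+b}{c\tau+d})=(c\tau+d)^{k-2}E_{s\gamma}(\tau)$ and $D_s(\frac{a\tau+b}{c\tau+d})=(c\tau+d)^{k-1}D_{s\gamma}(\tau)$, where $s\gamma=(a\alpha+c\beta,b\alpha+d\beta)$.
   Context: $\mathbf{e}(t)=e^{2\pi it}$. $\Gamma_0(N)$: $c\equiv0\bmod N$; $\Gamma_1(N)$: also $a\equiv d\equiv1\bmod N$. $J^N_{k,\frac mN}(\Gamma)$: functions $\psi$ on $\mathbb{H}\times\mathbb{C}$ with $\psi(\frac{a\tau+b}{c\tau+d},\frac z{c\tau+d})=(c\tau+d)^k\mathbf{e}(\frac mN\frac{cz^2}{c\tau+d})\psi(\tau,z)$ for $\gamma\in\Gamma$ and $\psi(\tau,z+\lambda\tau+\mu)=\mathbf{e}(-\frac mN(\lambda^2\tau+2\lambda z+\lambda\mu))\psi(\tau,z)$ for $(\lambda,\mu)\in N\mathbb{Z}\times\mathbb{Z}$. The residues $D_s,E_s$ are defined by $\mathbf{e}(\frac mN\alpha z_s)\psi(\tau,z_s+\varepsilon)=\frac{E_s(\tau)}{(2\pi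 i\varepsilon)^2}+\frac{D_s(\tau)-2\frac mN\alpha E_s(\tau)}{2\pi i\varepsilon}+O(1)$ as $\varepsilon\to0$. *)

(* Defs.v *)
From HB Require Import structures.
From mathcomp Require Import all_boot all_order all_algebra.
From mathcomp Require Import complex.
From mathcomp Require Import all_classical all_reals all_analysis.
Import Order.TTheory GRing.Theory Num.Theory.
Import numFieldNormedType.Exports.
Set Implicit Arguments. Unset Strict Implicit. Unset Printing Implicit Defensive.
Local Open Scope ring_scope.

Section Defs.
Variable R : realType.
Local Notation C := (R[i]).

Definition Cexp (z : C) : C :=
  ((expR (complex.Re z)) +i* 0)%C * ((cos (complex.Im z)) +i* (sin (complex.Im z)))%C.

Definition imagI : C := (0 +i* 1)%C.
Definition twopii : C := 2 * (pi +i* 0)%C * imagI.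

Definition ee (t : C) : C := Cexp (twopii * t).

Definition upper (tau : C) : Prop := 0 < complex.Im tau.

Definition mobius (a b c d : int) (tau : C) : C :=
  (a%:~R * tau + b%:~R) / (c%:~R * tau + d%:~R).

Definition zs (s : rat * rat) (tau : C) : C := ratr s.1 * tau + ratr s.2.

Definition sact (s : rat * rat) (a b c d : int) : rat * rat :=
  (a%:~R * s.1 + c%:~R * s.2, b%:~R * s.1 + d%:~R * s.2).

Inductive congr_group := Gamma0 | Gamma1.

Definition in_Gamma (G : congr_group) (N : nat) (a b c d : int) : Prop :=
  a * d - b * c = 1 /\ (N%:Z %| c)%Z /\
  (G = Gamma1 -> (N%:Z %| a - 1)%Z /\ (N%:Z %| d - 1)%Z).

Definition is_pole (S : set (rat * rat)) (tau z : C) : Prop :=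
  exists2 s, S s & z = zs s tau.

Definition holo_off_poles (S : set (rat * rat)) (psi : C -> C -> C) : Prop :=
  (forall tau z, upper tau -> ~ is_pole S tau z ->
     derivable (fun w : C^o => (psi tau w : C^o)) z 1) /\
  (forall tau z, upper tau -> ~ is_pole S tau z ->
     derivable (fun t : C^o => (psi t z : C^o)) tau 1).

(* transformation laws of J^N_{k, m/N}(Gamma), as identities of meromorphic
   functions, i.e. holding wherever both sides are away from the poles *)
Definition jacobi_form (G : congr_group) (N : nat) (k : int) (m : nat)
  (S : set (rat * rat)) (psi : C -> C -> C) : Prop :=
  (forall a b c d : int, in_Gamma G N a b c d ->
   forall tau z, upper tau -> ~ is_pole S tau z ->
     ~ is_pole S (mobius a b c d tau) (z / (c%:~R * tau + d%:~R)) ->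
     psi (mobius a b c d tau) (z / (c%:~R * tau + d%:~R)) =
       (c%:~R * tau + d%:~R) ^ k *
       ee ((m%:R / N%:R) * (c%:~R * z ^+ 2 / (c%:~R * tau + d%:~R))) * psi tau z) /\
  (forall l mu : int, forall tau z, upper tau -> ~ is_pole S tau z ->
     ~ is_pole S tau (z + (N%:Z * l)%:~R * tau + mu%:~R) ->
     psi tau (z + (N%:Z * l)%:~R * tau + mu%:~R) =
       ee (- (m%:R / N%:R) * ((N%:Z * l)%:~R ^+ 2 * tau + 2 * (N%:Z * l)%:~R * z
                               + (N%:Z * l)%:~R * mu%:~R)) * psi tau z).

(* E, D are the residue data of psi:
   e(m/N alpha z_s) psi(tau, z_s + eps)
     = E_s(tau)/(2 pi i eps)^2 + (D_s(tau) - 2 m/N alpha E_s(tau))/(2 pi i eps) + O(1)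
   as eps -> 0, for every s = (alpha, beta) in Q^2 and tau in H. *)
Definition residue_data (N : nat) (m : nat) (psi : C -> C -> C)
  (E D : rat * rat -> C -> C) : Prop :=
  forall (s : rat * rat) (tau : C), upper tau ->
  exists M delta : C, 0 < delta /\
    forall eps : C, 0 < `|eps| < delta ->
      `| ee ((m%:R / N%:R) * ratr s.1 * zs s tau) * psi tau (zs s tau + eps)
         - E s tau / (twopii * eps) ^+ 2
         - (D s tau - 2 * (m%:R / N%:R) * ratr s.1 * E s tau) / (twopii * eps) | <= M.

End Defs.

(* Main.v *)
Require Import Defs.
From HB Require Import structures.
From mathcomp Require Import all_boot all_order all_algebra.
From mathcomp Require Import complex.
From mathcomp Require Import all_classical all_reals all_analysis.
From mathcomp Require Import ring lra zify.
Import Order.TTheory GRing.Theory Num.Theory.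
Import numFieldNormedType.Exports.
Set Implicit Arguments. Unset Strict Implicit.
Local Open Scope ring_scope.

Section S.
Variable R : realType.
Local Notation C := R[i].


Lemma mvt_abs (f df : R -> R) (y K : R) :
  (forall x : R, is_derive x (1:R) f (df x)) ->
  (forall c, `|c| <= `|y| -> `|df c| <= K) -> `|f y - f 0| <= K * `|y|.
Proof.
move=> fd dfK.
have cf : continuous f.
  by move=> x; apply/differentiable_continuous/derivable1_diffP; exact: ex_derive.
have [y0|y0|->] := ltgtP y 0.
- have [] := @MVT R f df y 0 y0 (fun x _ => fd x).
    exact/continuous_subspaceT.
  move=> c; rewrite in_itv/= => /andP[yc c0] E.
  rewrite distrC E normrM sub0r normrN ler_wpM2r //.
  by apply: dfK; rewrite !ltr0_norm // lerN2 ltW.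
- have [] := @MVT R f df 0 y y0 (fun x _ => fd x).
    exact/continuous_subspaceT.
  move=> c; rewrite in_itv/= => /andP[c0 cy] E.
  rewrite E normrM subr0 ler_wpM2r //.
  by apply: dfK; rewrite !gtr0_norm // ltW.
- by rewrite subrr !normr0 mulr0.
Qed.

Lemma sin_abs_le (y : R) : `|sin y| <= `|y|.
Proof.
have := @mvt_abs sin cos y 1 (fun x => is_derive_sin x) (fun c _ => cos_max c).
by rewrite sin0 subr0 mul1r.
Qed.

Lemma cos_sub1_le (y : R) : `|cos y - 1| <= `|y| * `|y|.
Proof.
have := @mvt_abs cos (fun x => - sin x) y `|y| (fun x => is_derive_cos x).
rewrite cos0; apply => c cy; rewrite normrN; exact: le_trans (sin_abs_le c) cy.
Qed.

Lemma sin_sub_le (y : R) : `|sin y - y| <= `|y| * `|y| * `|y|.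
Proof.
have := @mvt_abs (sin - id)%R (fun x => cos x - 1) y (`|y| * `|y|)
  (fun x => is_deriveB (is_derive_sin x) (is_derive_id x 1)).
rewrite !fctE /= sin0 subr0 subr0; apply.
move=> c cy; apply: le_trans (cos_sub1_le c) _.
by apply: ler_pM.
Qed.

Lemma exp_taylor (x : R) : `|x| <= 1/2 -> `|expR x - 1 - x| <= 2 * x ^+ 2.
Proof.
move=> hx.
have h1 := expR_ge1Dx x.
have h2 := expR_ge1Dx (- x).
have h3 : expR x * expR (- x) = 1 by rewrite expRxMexpNx_1.
have hp := expR_gt0 x.
have hx1 : - (1/2) <= x <= 1/2 by rewrite -ler_norml.
case/andP: hx1 => hl hu.
rewrite ger0_norm; last by lra.
nra.
Qed.

Lemma sqrt_ge_abs (a b : R) : `|a| <= Num.sqrt (a^+2 + b^+2).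
Proof.
Timeout 20 rewrite -sqrtr_sqr.
Timeout 20 apply: ler_wsqrtr.
Timeout 20 rewrite lerDl; exact: sqr_ge0.
Qed.
Lemma sqrt_le_abs (a b : R) : Num.sqrt (a^+2 + b^+2) <= `|a| + `|b|.
Proof.
Timeout 20 rewrite -(ger0_norm (addr_ge0 (normr_ge0 a) (normr_ge0 b))) -sqrtr_sqr.
Timeout 20 apply: ler_wsqrtr.
have ha : a^+2 = `|a|^+2 by rewrite real_normK // num_real.
have hb : b^+2 = `|b|^+2 by rewrite real_normK // num_real.
rewrite ha hb; have := normr_ge0 a; have := normr_ge0 b.
set x := `|a|; set y := `|b|. Timeout 20 nra.
Qed.


Lemma normE (a b : R) : `|(a +i* b)%C| = (Num.sqrt (a^+2 + b^+2))%:C%C.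
Proof. by []. Qed.
Lemma CexpE (a b : R) : Cexp (a +i* b)%C = ((expR a * cos b) +i* (expR a * sin b))%C.
Proof. rewrite /Cexp /=; simpc. by []. Qed.
Lemma CexpD (z1 z2 : C) : Cexp (z1 + z2) = Cexp z1 * Cexp z2.
Proof.
case: z1 => a b; case: z2 => c d.
rewrite -[((a +i* b) + (c +i* d))%C]/((a + c) +i* (b + d))%C !CexpE.
rewrite -[((_ +i* _) * (_ +i* _))%C]/(_ +i* _)%C.
rewrite expRD sinD cosD.
by apply/eqP; rewrite eq_complex /=; apply/andP; split; apply/eqP; ring.
Qed.

Lemma Cexp_taylor (z : C) (r : R) : `|z| <= r%:C%C -> r <= 1/2 ->
  `|Cexp z - 1 - z| <= (8 * r^+2)%:C%C.
Proof.
case: z => a b; rewrite CexpE normE lecR => hn hr.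
have -> : ((expR a * cos b) +i* (expR a * sin b))%C - 1 - (a +i* b)%C =
   ((expR a * cos b - 1 - a) +i* (expR a * sin b - b))%C.
  Timeout 20 by apply/eqP; rewrite eq_complex /= !subr0 !eqxx.
rewrite normE lecR.
set n := Num.sqrt (a^+2+b^+2) in hn.
have ha : `|a| <= r := le_trans (sqrt_ge_abs a b) hn.
have hb : `|b| <= r by apply: le_trans hn; rewrite /n addrC; exact: sqrt_ge_abs.
apply: le_trans (sqrt_le_abs _ _) _.
have ea := @exp_taylor a (le_trans ha hr).
have cb := cos_max b.
have c1 := cos_sub1_le b.
have sb := sin_abs_le b.
have s1 := sin_sub_le b.
have e1 : expR a * cos b - 1 - a = (expR a - 1 - a) * cos b + (1 + a) * (cos b - 1) by ring.
have e2 : expR a * sin b - b = ((expR a - 1 - a) + a) * sin b + (sin b - b) by ring.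
rewrite e1 e2.
have ra : a^+2 = `|a|^+2 by rewrite real_normK // num_real.
have n1 := ler_normD ((expR a - 1 - a) * cos b) ((1 + a) * (cos b - 1)).
have n2 := ler_normD ((expR a - 1 - a + a) * sin b) (sin b - b).
have n3 := ler_normD (expR a - 1 - a) a.
have n4 := ler_normD 1 a.
rewrite !normrM normr1 in n1 n2 n4.
rewrite ra in ea.
have := normr_ge0 a; have := normr_ge0 b; have := normr_ge0 (cos b);
have := normr_ge0 (expR a - 1 - a); have := normr_ge0 (cos b - 1);
have := normr_ge0 (sin b); have := normr_ge0 (sin b - b);
have := normr_ge0 (1 + a); have := normr_ge0 (expR a - 1 - a + a).
move: n1 n2 n3 n4 ea cb c1 sb s1 ha hb hr.
set A := `|a|; set B := `|b|; set P := `|expR a - 1 - a|; set Q := `|cos b|.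
set U := `|cos b - 1|; set V := `|sin b|; set W := `|sin b - b|.
set X := `|1 + a|; set Y := `|expR a - 1 - a + a|.
set T1 := `|_ + (1 + a) * _|; set T2 := `|_ + (sin b - b)|.
move=> n1 n2 n3 n4 ea cb c1 sb s1 ha hb hr *.
have hPQ : P * Q <= 2 * A^+2 by rewrite -[2 * A^+2]mulr1; apply: ler_pM.
have hXU : X * U <= 2 * (B * B) by apply: ler_pM => //; lra.
have hYV : Y * V <= (2 * A) * B.
  apply: ler_pM => //.
  have : A^+2 <= A * (1/2) by rewrite expr2; apply: ler_wpM2l => //; lra.
  lra.
have hW : W <= B * B * (1/2).
  apply: le_trans s1 _; apply: ler_wpM2l; [by apply: mulr_ge0 | lra].
have hAB : A * B <= r * r by apply: ler_pM.
have hA2 : A^+2 <= r^+2 by rewrite !expr2; apply: ler_pM.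
have hB2 : B * B <= r * r by apply: ler_pM.
rewrite expr2 in hA2 *.
Timeout 30 lra.
Qed.

Lemma eeD (x y : C) : ee (x + y) = ee x * ee y.
Proof. by rewrite /ee mulrDr CexpD. Qed.

Definition nr (z : C) : R := complex.Re `|z|.
Lemma nrE (z : C) : `|z| = (nr z)%:C%C.
Proof. by case: z. Qed.
Lemma nr_ge0 (z : C) : 0 <= nr z.
Proof. rewrite /nr; case: z => a b; rewrite normE /=; exact: sqrtr_ge0. Qed.
Lemma nrM (x y : C) : nr (x * y) = nr x * nr y.
Proof. by apply: complexI; rewrite -nrE normrM !nrE rmorphM. Qed.
Lemma nrD (x y : C) : nr (x + y) <= nr x + nr y.
Proof. by rewrite -lecR rmorphD -!nrE ler_normD. Qed.
Lemma nrV (x : C) : nr (x^-1) = (nr x)^-1.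
Proof. by apply: complexI; rewrite -nrE normfV nrE fmorphV. Qed.
Lemma nrN (x : C) : nr (- x) = nr x.
Proof. by rewrite /nr normrN. Qed.
Lemma nrX (x : C) n : nr (x ^+ n) = nr x ^+ n.
Proof. by apply: complexI; rewrite -nrE normrX !nrE rmorphXn. Qed.
Lemma nr_eq0 (x : C) : (nr x == 0) = (x == 0).
Proof. by rewrite -[x == 0]normr_eq0 nrE -[0 : C]/((0 : R)%:C)%C (inj_eq (@complexI R)). Qed.
Lemma nr_le (x M : C) : `|x| <= M -> nr x <= complex.Re M.
Proof. by rewrite nrE lecE => /andP[]. Qed.
Lemma nr_lt (x M : C) : `|x| < M -> nr x < complex.Re M.
Proof. by rewrite nrE ltcE => /andP[]. Qed.
Lemma nr1 : nr 1 = 1.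
Proof. by apply: complexI; rewrite -nrE normr1. Qed.
End S.


Section S2.
Variable R : realType.
Local Notation C := R[i].

Lemma small0 (v K : R) : 0 <= K ->
  (forall r, 0 < r -> exists e, 0 <= e < r /\ v <= K * e) -> v <= 0.
Proof.
move=> K0 H; rewrite leNgt; apply/negP => v0.
have K1 : 0 < K + 1 by lra.
have [e [/andP[e0 er] ve]] := H (v / (K + 1)) (divr_gt0 v0 K1).
have : (K + 1) * e < v by rewrite -ltr_pdivlMl // mulrC.
have : K * e <= (K + 1) * e by rewrite ler_wpM2r //; lra.
lra.
Qed.

Lemma uniq_pp (A B : C) (M : R) (x : nat -> C) :
 (forall n, x n != 0) ->
 (forall r : R, 0 < r -> exists n0, forall n, (n0 <= n)%N -> nr (x n) < r) ->
 (exists n0, forall n, (n0 <= n)%N -> nr (A / x n ^+ 2 + B / x n) <= M) ->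
 A = 0 /\ B = 0.
Proof.
move=> nz small [n0 hb].
have step : forall r, 0 < r -> exists n, [/\ (n0 <= n)%N, nr (x n) < r & nr (x n) <= 1].
  move=> r r0; have m0 : 0 < Num.min r 1 by rewrite lt_min r0 ltr01.
  have [n1 hn1] := small (Num.min r 1) m0.
  exists (maxn n0 n1); have := hn1 (maxn n0 n1) (leq_maxr _ _).
  rewrite lt_min => /andP[h1 h2]; split => //; [exact: leq_maxl | exact: ltW].
have M0 : M <= `|M| := ler_norm M.
have hA : A = 0.
  apply/eqP; rewrite -nr_eq0 eq_le nr_ge0 andbT.
  apply: (@small0 _ (`|M| + nr B)); first by rewrite addr_ge0 ?nr_ge0.
  move=> r r0; have [n [nn xr x1]] := step r r0.
  exists (nr (x n)); rewrite nr_ge0 xr; split => //.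
  set X := x n in xr x1 *.
  have XA : A = X ^+ 2 * (A / X ^+ 2 + B / X) - B * X.
    by field; rewrite nz.
  have := hb n nn; rewrite -/X => hbn.
  have X0 := nr_ge0 X.
  have e1 : nr A <= nr X ^+ 2 * M + nr B * nr X.
    rewrite {1}XA; apply: le_trans (nrD _ _) _; rewrite nrN (nrM (X ^+ 2)) nrX nrM.
    by rewrite lerD2r ler_wpM2l ?exprn_ge0.
  have e2 : nr X ^+ 2 * M <= nr X * `|M|.
    apply: le_trans (_ : nr X ^+ 2 * `|M| <= _); first by rewrite ler_wpM2l ?exprn_ge0.
    by rewrite expr2 -mulrA ler_wpM2l // ler_piMl.
  nra.
split => //.
apply/eqP; rewrite -nr_eq0 eq_le nr_ge0 andbT.
apply: (@small0 _ `|M|) => // r r0; have [n [nn xr x1]] := step r r0.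
exists (nr (x n)); rewrite nr_ge0 xr; split => //.
set X := x n in xr x1 *.
have XB : B = X * (A / X ^+ 2 + B / X) by rewrite hA; field; rewrite nz.
have := hb n nn; rewrite -/X => hbn.
rewrite XB nrM mulrC; apply: le_trans (_ : M * nr X <= _).
  by rewrite ler_wpM2r ?nr_ge0.
by rewrite ler_wpM2r ?nr_ge0.
Qed.

Lemma nr_div_le (r X : C) (c : R) : X != 0 -> nr r <= c * nr X ^+ 2 -> nr (r / X ^+ 2) <= c.
Proof.
move=> X0 h; rewrite nrM nrV nrX.
have p : 0 < nr X ^+ 2 by rewrite exprn_gt0 // lt_def nr_eq0 X0 nr_ge0.
by rewrite ler_pdivrMr.
Qed.

Lemma key (E1 B1 E2 B2 j Jk lam : C) (C3 M1 M2 : R) (X g Phi : C) :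
 X != 0 -> j != 0 -> nr X <= 1 -> 0 <= C3 ->
 nr (Jk * g * Phi - E1 / X ^+ 2 - B1 / X) <= M1 ->
 nr (Phi - E2 / (j * X) ^+ 2 - B2 / (j * X)) <= M2 ->
 nr (g - 1 - lam * X) <= C3 * nr X ^+ 2 ->
 nr ((Jk * E2 / j ^+ 2 - E1) / X ^+ 2 + (Jk * B2 / j + Jk * lam * E2 / j ^+ 2 - B1) / X)
   <= M1 + nr Jk * (C3 * (nr (E2 / j ^+ 2) + nr (B2 / j)) + nr (lam * B2 / j)
                    + (1 + nr lam + C3) * M2).
Proof.
move=> X0 j0 X1 C30 h1 h2 h3.
set R2 := Phi - _ - _ in h2.
set r := g - 1 - lam * X in h3.
have id : (Jk * E2 / j ^+ 2 - E1) / X ^+ 2 + (Jk * B2 / j + Jk * lam * E2 / j ^+ 2 - B1) / X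
   = (Jk * g * Phi - E1 / X ^+ 2 - B1 / X)
     - Jk * ((r / X ^+ 2) * (E2 / j ^+ 2 + (B2 / j) * X) + lam * B2 / j + g * R2).
  rewrite /r /R2; field; by rewrite X0 j0.
rewrite id; apply: le_trans (nrD _ _) _; rewrite nrN; apply: lerD => //.
rewrite nrM; apply: ler_wpM2l; first exact: nr_ge0.
have M20 : 0 <= M2 := le_trans (nr_ge0 _) h2.
have X0' := nr_ge0 X.
have hr := nr_div_le X0 h3.
have hq : nr (E2 / j ^+ 2 + B2 / j * X) <= nr (E2 / j ^+ 2) + nr (B2 / j).
  apply: le_trans (nrD _ _) _; rewrite lerD2l nrM.
  by rewrite -[X in _ <= X]mulr1 ler_wpM2l ?nr_ge0.
have hg : nr g <= 1 + nr lam + C3.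
  have -> : g = 1 + lam * X + r by rewrite /r; ring.
  apply: le_trans (nrD _ _) _; apply: lerD.
    apply: le_trans (nrD _ _) _; rewrite nr1 lerD2l nrM.
    by rewrite -[X in _ <= X]mulr1 ler_wpM2l ?nr_ge0.
  apply: le_trans h3 _; rewrite -[X in _ <= X]mulr1 ler_wpM2l //.
  by rewrite expr_le1.
apply: le_trans (nrD _ _) _; apply: lerD; last first.
  by rewrite nrM; apply: ler_pM => //; apply: nr_ge0.
apply: le_trans (nrD _ _) _; apply: lerD => //.
by rewrite nrM; apply: ler_pM => //; apply: nr_ge0.
Qed.

Lemma quad_taylor (lam mu : C) : exists C3 rho : R, [/\ 0 <= C3, 0 < rho, rho <= 1 &
  forall X, nr X <= rho ->
    nr (Cexp (lam * X + mu * X ^+ 2) - 1 - lam * X) <= C3 * nr X ^+ 2].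
Proof.
set P := nr lam; set Q := nr mu.
have P0 : 0 <= P := nr_ge0 _.
have Q0 : 0 <= Q := nr_ge0 _.
have D0 : 0 < 2 * (P + Q + 1) by lra.
exists (8 * (P + Q) ^+ 2 + Q), (2 * (P + Q + 1))^-1; split.
- by rewrite addr_ge0 // mulr_ge0 // exprn_ge0 // addr_ge0.
- by rewrite invr_gt0.
- by rewrite invf_le1 //; lra.
move=> X hX.
set x := nr X.
have x0 : 0 <= x := nr_ge0 _.
have hx : 2 * (P + Q + 1) * x <= 1 by rewrite mulrC -ler_pdivlMr // mul1r.
have x1 : x <= 1 by nra.
have hz : nr (lam * X + mu * X ^+ 2) <= (P + Q) * x.
  apply: le_trans (nrD _ _) _; rewrite (nrM lam) (nrM mu) nrX -/x -/P -/Q.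
  have : x ^+ 2 <= x by rewrite expr2 -[X in _ <= X]mul1r ler_wpM2r.
  nra.
have hr : (P + Q) * x <= 1/2 by nra.
have := @Cexp_taylor R (lam * X + mu * X ^+ 2) ((P + Q) * x).
rewrite nrE lecR => /(_ hz hr) /nr_le /= ht.
have -> : Cexp (lam * X + mu * X ^+ 2) - 1 - lam * X =
   (Cexp (lam * X + mu * X ^+ 2) - 1 - (lam * X + mu * X ^+ 2)) + mu * X ^+ 2 by ring.
apply: le_trans (nrD _ _) _; rewrite nrM nrX -/x -/Q.
have : 8 * ((P + Q) * x) ^+ 2 = 8 * (P + Q) ^+ 2 * x ^+ 2 by ring.
nra.
Qed.
End S2.


Lemma nat_sq2 (A B : nat) : (0 < B)%N -> (A ^ 2 = 2 * B ^ 2)%N -> False.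
Proof.
move=> B0 h.
have A0 : (0 < A)%N.
  rewrite lt0n; apply/eqP => A0; move: h; rewrite A0 /=; lia.
have := congr1 (logn 2) h.
rewrite lognX lognM ?expn_gt0 ?B0 // lognX (@logn_prime 2 2) //=.
lia.
Qed.

Lemma rat_sq2 (x : rat) : x ^+ 2 != 2.
Proof.
apply/eqP => h.
have d0 : (denq x)%:~R != 0 :> rat by rewrite intr_eq0 denq_neq0.
have e : (numq x)%:~R ^+ 2 = 2 * (denq x)%:~R ^+ 2 :> rat.
  have hx : x = (numq x)%:~R / (denq x)%:~R by rewrite divq_num_den.
  move: d0 hx; set n := numq x; set d := denq x => d0 hx.
  by rewrite -h hx; field.
have e2 : numq x ^+ 2 = 2 * denq x ^+ 2.
  apply: (@intr_inj rat); rewrite rmorphXn rmorphM /= e; congr (_ * _); by rewrite rmorphXn.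
have b0 : (0 < `|denq x|)%N by rewrite absz_gt0 denq_neq0.
apply: (@nat_sq2 `|numq x|%N _ b0).
by move: (congr1 absz e2); rewrite abszM !abszX.
Qed.


Section S4.
Variable R : realType.
Local Notation C := R[i].

Lemma intC (z : int) : (z%:~R : C) = (z%:~R : R)%:C%C.
Proof. by rewrite rmorph_int. Qed.
Lemma ratC (r : rat) : (ratr r : C) = (ratr r : R)%:C%C.
Proof. by rewrite fmorph_rat. Qed.

Lemma Re_lin (u v : R) (t : C) : complex.Re (u%:C%C * t + v%:C%C) = u * complex.Re t + v.
Proof. by case: t => x y /=; ring. Qed.
Lemma Im_lin (u v : R) (t : C) : complex.Im (u%:C%C * t + v%:C%C) = u * complex.Im t.
Proof. by case: t => x y /=; ring. Qed.
Lemma Im_div (p q : C) : complex.Im (p / q) =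
  (complex.Im p * complex.Re q - complex.Re p * complex.Im q) / (complex.Re q ^+ 2 + complex.Im q ^+ 2).
Proof. by case: p => a b; case: q => c d /=; ring. Qed.

Lemma j_nz (a b c d : int) (t : C) : a * d - b * c = 1 -> upper t ->
  c%:~R * t + d%:~R != 0.
Proof.
move=> det ut; apply/eqP => h.
have hi := congr1 (@complex.Im R) h; have hr := congr1 (@complex.Re R) h.
rewrite !intC Im_lin /= in hi; rewrite !intC Re_lin /= in hr.
have c0 : (c%:~R : R) = 0.
  by move/eqP: hi; rewrite mulf_eq0 => /orP[/eqP //|/eqP ht]; move: ut; rewrite /upper ht ltxx.
rewrite c0 mul0r add0r in hr.
move/eqP: c0; rewrite intr_eq0 => /eqP c0.
move/eqP: hr; rewrite intr_eq0 => /eqP d0.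
by move: det; rewrite c0 d0 !mulr0 subrr.
Qed.

Lemma upper_mobius (a b c d : int) (t : C) : a * d - b * c = 1 -> upper t ->
  upper (mobius a b c d t).
Proof.
move=> det ut; have jn := j_nz det ut.
rewrite /upper /mobius Im_div !intC !Re_lin !Im_lin.
have -> : (a%:~R * complex.Im t * (c%:~R * complex.Re t + d%:~R) -
   (a%:~R * complex.Re t + b%:~R) * (c%:~R * complex.Im t)) = 
   (a * d - b * c)%:~R * complex.Im t :> R.
  by rewrite rmorphB !rmorphM /=; ring.
rewrite det mul1r; apply: divr_gt0 => //.
rewrite lt_def addr_ge0 ?sqr_ge0 // andbT paddr_eq0 ?sqr_ge0 // !sqrf_eq0.
apply: contra jn => /andP[/eqP h1 /eqP h2].
apply/eqP; case: t ut h1 h2 {det} => x y ut /= h1 h2.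
rewrite !intC; apply/eqP; rewrite eq_complex /=; apply/andP; split; apply/eqP.
  by rewrite -[RHS]h1; ring.
by rewrite -[RHS]h2; ring.
Qed.

Lemma not_span (t : C) (p q : rat) (n : nat) : upper t ->
  ((Num.sqrt 2 / n.+1%:R : R)%:C)%C != ratr p * t + ratr q.
Proof.
move=> ut; apply/eqP => h.
rewrite !ratC in h.
have hi := congr1 (@complex.Im R) h; rewrite Im_lin /= in hi.
have p0 : (ratr p : R) = 0.
  move/esym/eqP: hi; rewrite mulf_eq0 => /orP[/eqP //|/eqP ht].
  by move: ut; rewrite /upper ht ltxx.
have hr := congr1 (@complex.Re R) h; rewrite Re_lin p0 mul0r add0r /= in hr.
have s2 : Num.sqrt (2 : R) = ratr (q * n.+1%:R).
  by rewrite rmorphM rmorph_nat /= -hr mulfVK.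
have e := congr1 (fun v => v ^+ 2) s2; rewrite /= sqr_sqrtr ?ler0n // -rmorphXn in e.
move/eqP: (rat_sq2 (q * n.+1%:R)); apply; apply: (fmorph_inj (@ratr R)).
transitivity (2 : R); first exact: (esym e).
by rewrite rmorph_nat.
Qed.
End S4.


Section S5.
Variable R : realType.
Local Notation C := R[i].

Lemma nr_nat n : nr (n%:R : C) = n%:R.
Proof. by apply: complexI; rewrite -nrE normr_nat rmorph_nat. Qed.

Lemma small_seq (X0 : C) (r : R) : 0 < r ->
  exists n0, forall n, (n0 <= n)%N -> nr (X0 / n.+1%:R) < r.
Proof.
move=> r0; exists (Num.bound (nr X0 / r)) => n hn.
rewrite nrM nrV nr_nat ltr_pdivrMr ?ltr0Sn // mulrC -ltr_pdivrMr //.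
apply: lt_le_trans (archi_boundP _) _; first by rewrite divr_ge0 ?nr_ge0 ?ltW.
by rewrite ler_nat ltnW.
Qed.

Lemma twopii_nz : twopii R != 0.
Proof.
rewrite /twopii !mulf_neq0 //.
  by rewrite eq_complex /= eqxx andbT; apply/lt0r_neq0; exact: pi_gt0.
by rewrite /imagI eq_complex /= oner_eq0 andbF.
Qed.

Lemma lt_delta (e d : C) : 0 < d -> nr e < complex.Re d -> `|e| < d.
Proof.
rewrite ltcE /= => /andP[/eqP di _] h.
by rewrite nrE ltcE /= di eqxx.
Qed.
End S5.

Unset Implicit Arguments. Set Strict Implicit.


Theorem proposition4p6 (R : realType) (N : nat) (k : int) (m : nat)
  (G : congr_group) (S : set (rat * rat)) (psi : R[i] -> R[i] -> R[i])
  (E D : rat * rat -> R[i] -> R[i]) :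
  (0 < N)%N -> (0 < m)%N ->
  holo_off_poles S psi ->
  jacobi_form G N k m S psi ->
  residue_data N m psi E D ->
  forall s : rat * rat, S s ->
  forall a b c d : int, in_Gamma G N a b c d ->
  forall tau : R[i], upper tau ->
    E s (mobius a b c d tau) = (c%:~R * tau + d%:~R) ^ (k - 2) * E (sact s a b c d) tau /\
    D s (mobius a b c d tau) = (c%:~R * tau + d%:~R) ^ (k - 1) * D (sact s a b c d) tau.
Proof.
move=> N0 m0 _ [jmod _] rd s Ss a b c d inG tau ut.
have [det _] := inG.
have jn := j_nz det ut.
have uw := upper_mobius det ut.
set j := c%:~R * tau + d%:~R in jn *.
set w := mobius a b c d tau in uw *.
set s' := sact s a b c d.
set K : R[i] := m%:R / N%:R.
set T := twopii R.
have Tn : T != 0 := twopii_nz R.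
set al := (ratr s.1 : R[i]); set be := (ratr s.2 : R[i]).
set al' := (ratr s'.1 : R[i]); set be' := (ratr s'.2 : R[i]).
set u := zs s' tau.
have det' : (a%:~R * d%:~R - b%:~R * c%:~R : R[i]) = 1.
  by rewrite -!rmorphM -rmorphB det.
have hal' : al' = a%:~R * al + c%:~R * be.
  by rewrite /al' /s' /sact /= rmorphD !rmorphM /= !ratr_int.
have hbe' : be' = b%:~R * al + d%:~R * be.
  by rewrite /be' /s' /sact /= rmorphD !rmorphM /= !ratr_int.
have wj : w * j = a%:~R * tau + b%:~R by rewrite /w /mobius -/j mulfVK.
have F1 : zs s w = u / j.
  apply: (mulIf jn); rewrite mulfVK // /zs -/al -/be /u /zs -/al' -/be' mulrDl -mulrA wj.
  by rewrite hal' hbe' /j; ring.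
have F2 : al + c%:~R * u = al' * j.
  rewrite /u /zs -/al' -/be' /j hbe' hal'.
  transitivity (al * (a%:~R * d%:~R - b%:~R * c%:~R) + c%:~R * ((a%:~R * al + c%:~R * be) * tau + (b%:~R * al + d%:~R * be))); first by rewrite det' mulr1.
  ring.
have [M1 [dl1 [dl1p H1]]] := rd s w uw.
have [M2 [dl2 [dl2p H2]]] := rd s' tau ut.
rewrite -/K -/al in H1. rewrite -/K -/u -/al' in H2.
set lam := 2 * K * c%:~R * u.
set mu := K * c%:~R * j / T.
have [C3 [rho [C30 rho0 rho1 HT]]] := quad_taylor lam mu.
set s2 : R[i] := ((Num.sqrt 2 : R)%:C)%C.
have s2n : s2 != 0.
  by rewrite /s2 eq_complex /= eqxx andbT; apply/lt0r_neq0; rewrite sqrtr_gt0 ltr0n.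
set eps := fun n : nat => s2 / j / n.+1%:R.
set X := fun n : nat => T * s2 / j / n.+1%:R.
have epsn : forall n, eps n != 0.
  by move=> n; rewrite /eps !mulf_neq0 ?invr_eq0 ?pnatr_eq0.
have XE : forall n, X n = T * eps n by move=> n; rewrite /X /eps !mulrA.
have Xn : forall n, X n != 0 by move=> n; rewrite XE mulf_neq0.
have jeps : forall n, j * eps n = ((Num.sqrt 2 / n.+1%:R : R)%:C)%C.
  move=> n; rewrite /eps rmorphM fmorphV rmorph_nat /= -/s2.
  by field; rewrite jn andbT -(natrD _ 1 n) pnatr_eq0.
have NP1 : forall n, ~ is_pole S tau (u + j * eps n).
  move=> n [s'' _ h].
  apply: (negP (not_span (s''.1 - s'.1) (s''.2 - s'.2) n ut)).
  apply/eqP; rewrite -jeps !rmorphB /= -/al' -/be'.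
  have -> : j * eps n = zs s'' tau - u by rewrite -h; ring.
  by rewrite /u /zs -/al' -/be'; ring.
have NP2 : forall n, ~ is_pole S w ((u + j * eps n) / j).
  move=> n [s'' _ h].
  have h' : u + j * eps n = zs s'' w * j by rewrite -h mulfVK.
  apply: (negP (not_span (s''.1 * a%:~R + s''.2 * c%:~R - s'.1)
                         (s''.1 * b%:~R + s''.2 * d%:~R - s'.2) n ut)).
  apply/eqP; rewrite -jeps !rmorphB !rmorphD !rmorphM /= !ratr_int -/al' -/be'.
  have -> : j * eps n = zs s'' w * j - u by rewrite -h'; ring.
  rewrite /zs mulrDl -mulrA wj /u /zs -/al -/be -/al' -/be' hal' hbe'; rewrite /j; ring.
have dl1r : 0 < complex.Re dl1 by move: dl1p; rewrite ltcE => /andP[].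
have dl2r : 0 < complex.Re dl2 by move: dl2p; rewrite ltcE => /andP[].
have [n1 hn1] := small_seq (s2 / j) dl1r.
have [n2 hn2] := small_seq s2 dl2r.
have [n3 hn3] := small_seq (T * s2 / j) rho0.
set Jk := j ^ k.
set E1 := E s w; set D1 := D s w; set E2 := E s' tau; set D2 := D s' tau.
set B1 := D1 - 2 * K * al * E1; set B2 := D2 - 2 * K * al' * E2.
have F2' : al = al' * j - c%:~R * u by rewrite -F2; ring.
have [hA hB] : (Jk * E2 / j ^+ 2 - E1) = 0 /\ (Jk * B2 / j + Jk * lam * E2 / j ^+ 2 - B1) = 0.
  apply: (@uniq_pp _ _ _ (complex.Re M1 + nr Jk * (C3 * (nr (E2 / j ^+ 2) + nr (B2 / j))
      + nr (lam * B2 / j) + (1 + nr lam + C3) * complex.Re M2)) X Xn).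
    move=> r r0; have [n0 h] := small_seq (T * s2 / j) r0; exists n0 => n hn; exact: h.
  exists (maxn (maxn n1 n2) n3) => n hn.
  have hn1' : (n1 <= n)%N by apply: leq_trans hn; rewrite leq_max leq_max leqnn.
  have hn2' : (n2 <= n)%N by apply: leq_trans hn; rewrite leq_max leq_max leqnn orbT.
  have hn3' : (n3 <= n)%N by apply: leq_trans hn; rewrite leq_max leqnn orbT.
  have e1 : 0 < `|eps n| < dl1 by rewrite normr_gt0 epsn /= lt_delta // hn1.
  have je : j * eps n = s2 / n.+1%:R by rewrite /eps; field; rewrite jn andbT -(natrD _ 1 n) pnatr_eq0.
  have e2 : 0 < `|j * eps n| < dl2.
    by rewrite normr_gt0 mulf_neq0 //= lt_delta // je hn2.
  have h1 := H1 _ e1.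
  have h2 := H2 _ e2.
  have jac := jmod a b c d inG tau (u + j * eps n) ut (NP1 n) (NP2 n).
  rewrite -/j -/w -/K in jac.
  have zw : (u + j * eps n) / j = zs s w + eps n by rewrite F1; field.
  rewrite zw in jac; rewrite jac -/E1 -/D1 -/B1 in h1.
  have ee1 : ee (K * al * zs s w) * ee (K * (c%:~R * (u + j * eps n) ^+ 2 / j)) =
             ee (K * al' * u) * Cexp (lam * X n + mu * X n ^+ 2).
    have -> : Cexp (lam * X n + mu * X n ^+ 2) = ee (lam * eps n + K * c%:~R * j * eps n ^+ 2).
      by rewrite /ee -/T XE /mu; congr Cexp; field.
    rewrite -!eeD; congr ee.
    by rewrite F1 F2' /lam; field.
  have hexp : ee (K * al * zs s w) * (Jk * ee (K * (c%:~R * (u + j * eps n) ^+ 2 / j)) * psi tau (u + j * eps n))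
     = Jk * Cexp (lam * X n + mu * X n ^+ 2) * (ee (K * al' * u) * psi tau (u + j * eps n)).
    transitivity (Jk * (ee (K * al * zs s w) * ee (K * (c%:~R * (u + j * eps n) ^+ 2 / j))) * psi tau (u + j * eps n)); first by ring.
    by rewrite ee1; ring.
  rewrite hexp -XE in h1.
  rewrite -/E2 -/D2 -/B2 (_ : T * (j * eps n) = j * X n) in h2; last by rewrite XE; ring.
  have hX : nr (X n) <= rho by apply: ltW; exact: hn3.
  have hT := HT (X n) hX.
  have X1 : nr (X n) <= 1 := le_trans hX rho1.
  exact: key (Xn n) jn X1 C30 (nr_le h1) (nr_le h2) hT.
have hk2 : Jk = j ^ (k - 2) * j ^+ 2.
  by rewrite /Jk -[j ^+ 2]/(j ^ (2%:Z)) -expfzDr // subrK.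
have hk1 : j ^ (k - 1) = j ^ (k - 2) * j.
  by rewrite -[j]/(j ^ (1%:Z)) -expfzDr // -addrA.
have eE1 : E1 = j ^ (k - 2) * E2.
  transitivity (Jk * E2 / j ^+ 2 - (Jk * E2 / j ^+ 2 - E1)); first by ring.
  by rewrite hA subr0 hk2; field.
split => //.
have eB1 : B1 = Jk * B2 / j + Jk * lam * E2 / j ^+ 2.
  by apply/eqP; rewrite eq_sym -subr_eq0 hB.
have : D1 = B1 + 2 * K * al * E1 by rewrite /B1; ring.
rewrite eB1 eE1 hk1 hk2 /B2 /lam F2' => ->.
by field.
Qed.
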